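(* Let $A\in\mathbb{R}^{d\times d}$, $B\in\mathbb{R}^{d\times n}$, $M=\begin{bmatrix}Q&S^*\\S&R\end{bmatrix}$ symmetric with $Q\in\mathbb{R}^{d\times d}$, $S\in\mathbb{R}^{n\times d}$, $R\in\mathbb{R}^{n\times n}$, and let $\rho>0$, $\delta\ge0$. For $\lambda\ge0$ set \[ M(\delta,\lambda)=\begin{bmatrix} Q & S^* & 0\\ S & R+\lambda\delta^2 I & 0\\ 0&0&-\lambda I\end{bmatrix},\qquad B_2=\begin{bmatrix} B & B\end{bmatrix}\in\mathbb{R}^{d\times 2n}. \] If there exists $N\in\mathbb{R}^{n\times d}$ such that $A+BN$ is $\rho$-Schur and $Q+2\,\Re\,S^*N+N^*RN\ge0$, then $(A,B_2,M(\delta,\lambda))$ is $\rho$-minimally stable for every $\lambda\ge0$.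
   Context: For a triple $(\mathcal{A},\mathcal{B},\mathcal{M})$ with $\mathcal{A}\in\mathbb{R}^{d\times d}$, $\mathcal{B}\in\mathbb{R}^{d\times q}$ and symmetric $\mathcal{M}=\begin{bmatrix}Q'&S'^*\\S'&R'\end{bmatrix}\in\mathbb{R}^{(d+q)\times(d+q)}$: sequences $(x,w)$ with $x(k)\in\mathbb{R}^d$, $w(k)\in\mathbb{R}^q$ lie in $\mathcal{B}(\mathcal{A},\mathcal{B})$ if $x(k+1)=\mathcal{A}x(k)+\mathcal{B}w(k)$, and in $\mathrm{IQC}(\mathcal{M},\rho)$ if $\sum_{k=0}^N\rho^{-2k}(\langle Q'x(k),x(k)\rangle+2\langle S'x(k),w(k)\rangle+\langle R'w(k),w(k)\rangle)\ge0$ for all $N\ge0$. The triple is $\rho$-minimally stable if for every $x_0\in\mathbb{R}^d$ there is $(x,w)\in\mathcal{B}(\mathcal{A},\mathcal{B})\cap\mathrm{IQC}(\mathcal{M},\rho)$ with $x(0)=x_0$ and $\rho^{-k}x(k)\to0$. For $(A,B_2,M(\delta,\lambda))$ the input is $w=(u,e)\in\mathbb{R}^{2n}$. A square matrix is $\rho$-Schur if its eigenvalues lie in the open disk of radius $\rho$. *)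

(* Defs.v *)
From HB Require Import structures.
From mathcomp Require Import all_boot all_order all_algebra.
From mathcomp Require Import complex.
From mathcomp Require Import all_classical all_reals all_analysis.
Set Implicit Arguments. Unset Strict Implicit. Unset Printing Implicit Defensive.
Import Order.TTheory GRing.Theory Num.Theory.
Import numFieldNormedType.Exports.
Local Open Scope classical_set_scope.
Local Open Scope ring_scope.

Section Defs.
Variable R : realType.

Definition rho_schur (d : nat) (rho : R) (A : 'M[R]_d) : Prop :=
  forall z : R[i], eigenvalue (map_mx (fun x : R => (x%:C)%C) A) z -> `|z| < (rho%:C)%C.

Definition psd (d : nat) (P : 'M[R]_d) : Prop :=
  forall x : 'cV[R]_d, 0 <= (x^T *m P *m x) 0 0.

Definition behav (d q : nat) (A : 'M[R]_d) (B : 'M[R]_(d, q))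
  (x : nat -> 'cV[R]_d) (w : nat -> 'cV[R]_q) : Prop :=
  forall k, x k.+1 = A *m x k + B *m w k.

Definition iqc (d q : nat) (M : 'M[R]_(d + q)) (rho : R)
  (x : nat -> 'cV[R]_d) (w : nat -> 'cV[R]_q) : Prop :=
  forall N : nat,
    0 <= \sum_(k < N.+1) rho ^- (2 * k) *
          (((x k)^T *m (ulsubmx M *m x k)) 0 0
           + 2 * ((w k)^T *m (dlsubmx M *m x k)) 0 0
           + ((w k)^T *m (drsubmx M *m w k)) 0 0).

Definition rho_min_stable (d q : nat) (rho : R) (A : 'M[R]_d)
  (B : 'M[R]_(d, q)) (M : 'M[R]_(d + q)) : Prop :=
  forall x0 : 'cV[R]_d, exists (x : nat -> 'cV[R]_d) (w : nat -> 'cV[R]_q),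
    [/\ behav A B x w, iqc M rho x w, x 0%N = x0 &
        (fun k => rho ^- k *: x k) @ \oo --> (0 : 'cV[R]_d)].

Definition Mdl (d n : nat) (Q : 'M[R]_d) (S : 'M[R]_(n, d)) (Rm : 'M[R]_n)
  (delta lambda : R) : 'M[R]_(d + (n + n)) :=
  block_mx Q (row_mx S^T 0)
           (col_mx S 0)
           (block_mx (Rm + (lambda * delta ^+ 2)%:M) 0 0 (- lambda%:M)).

End Defs.

(* Main.v *)
Require Import Defs.
From HB Require Import structures.
From mathcomp Require Import all_boot all_order all_algebra.
From mathcomp Require Import complex.
From mathcomp Require Import all_classical all_reals all_analysis.
From mathcomp Require Import lra.
Import Order.TTheory GRing.Theory Num.Theory.
Import numFieldNormedType.Exports.
Local Open Scope classical_set_scope.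
Local Open Scope ring_scope.

Definition vanish (R : realType) (u : nat -> R) :=
  forall e : R, 0 < e -> exists K, forall k, (K <= k)%N -> u k < e.

Arguments vanish {R}.

Lemma geo_small (R : realType) (q t : R) : 0 <= q < 1 -> 0 < t ->
  exists J, forall n, (J <= n)%N -> q ^+ n < t.
Proof.
move=> /andP[q0 q1] t0.
have := @cvg_expr R q; rewrite ger0_norm // => /(_ q1) /cvgr0_norm_lt /(_ t t0).
move=> [J _ HJ]; exists J => n Jn.
have := HJ n Jn; rewrite /= ger0_norm // exprn_ge0 //.
Qed.

Lemma key (R : realType) (a b : nat -> R) (q : R) : 0 <= q < 1 ->
  (forall k, 0 <= a k) -> (forall k, a k.+1 <= q * a k + b k) ->
  vanish b -> vanish a.
Proof.
move=> /andP[q0 q1] a0 rec vb e e0.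
pose e1 := e / 2.
have e10 : 0 < e1 by rewrite /e1 divr_gt0.
have hq : 0 < 1 - q by rewrite subr_gt0.
have [K HK] := vb (e1 * (1 - q)) (mulr_gt0 e10 hq).
pose c k := Num.max (a k - e1) 0.
have c0 k : 0 <= c k by rewrite /c le_max lexx orbT.
have cs k : (K <= k)%N -> c k.+1 <= q * c k.
  move=> Kk; have bk := HK k Kk; have rk := rec k.
  rewrite /c ge_max mulr_ge0 ?c0 ?andbT //.
  apply: le_trans (_ : q * (a k - e1) <= _); last first.
    by apply: ler_wpM2l => //; rewrite le_max lexx.
  lra.
have cj j : c (K + j)%N <= q ^+ j * c K.
  elim: j => [|j IH]; first by rewrite addn0 expr0 mul1r.
  rewrite addnS exprS -mulrA; apply: le_trans (cs _ (leq_addr _ _)) _.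
  by apply: ler_wpM2l.
have cK1 : 0 < c K + 1 by have := c0 K; lra.
have [J HJ] := @geo_small R q (e1 / (c K + 1)) (ltac:(by apply/andP)) (divr_gt0 e10 cK1).
exists (K + J)%N => k Kk.
have -> : k = (K + (k - K))%N by rewrite subnKC // (leq_trans (leq_addr J K)) // addnC.
have h1 := cj (k - K)%N.
have h2 := HJ (k - K)%N (ltac:(by rewrite leq_subRL ?(leq_trans (leq_addr J K)) // addnC)).
have h3 : a (K + (k - K))%N - e1 <= c (K + (k - K))%N by rewrite /c le_max lexx.
have h4 : q ^+ (k - K) * c K <= e1 / (c K + 1) * c K.
  by apply: ler_wpM2r; [exact: c0 | exact: ltW].
have h5 : e1 / (c K + 1) * c K < e1.
  rewrite mulrAC ltr_pdivrMr // ; have := c0 K; nra.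
rewrite /e1 in h3 h4 h5 *; lra.
Qed.

Section Cx.
Variable R : realType.
Local Notation C := R[i].
Definition nc (z : C) : R := Normc.normc z.

Lemma nc_ge0 z : 0 <= nc z.
Proof. by case: z => a b; rewrite /nc /= sqrtr_ge0. Qed.

Lemma nc_real (r : R) : nc (r%:C)%C = `|r|.
Proof. by rewrite /nc /= expr0n /= addr0 sqrtr_sqr. Qed.

Lemma normc_nc (z : C) : `|z| = ((nc z)%:C)%C.
Proof. by []. Qed.

Lemma keyC (z : C) (u : nat -> C) : nc z < 1 ->
  vanish (fun k => nc (u k.+1 - z * u k)) -> vanish (fun k => nc (u k)).
Proof.
move=> z1; apply: (@key R _ _ (nc z)).
- by rewrite nc_ge0 z1.
- by move=> k; exact: nc_ge0.
move=> k; have -> : u k.+1 = z * u k + (u k.+1 - z * u k) by rewrite addrC subrK.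
apply: le_trans (le_normcD _ _) _.
by rewrite /nc Normc.normcM addrAC subrr add0r.
Qed.

Fixpoint opS (rs : seq C) (u : nat -> C) : nat -> C :=
  if rs is z :: rs' then opS rs' (fun k => u k.+1 - z * u k) else u.

Lemma opS_vanish rs u : (forall z, z \in rs -> nc z < 1) ->
  vanish (fun k => nc (opS rs u k)) -> vanish (fun k => nc (u k)).
Proof.
elim: rs u => [|z rs IH] u //= H v.
apply: keyC; first by apply: H; exact: mem_head.
apply: IH => // y yin; apply: H; by rewrite in_cons yin orbT.
Qed.

Fixpoint opV n (rs : seq C) (y : nat -> 'cV[C]_n) : nat -> 'cV[C]_n :=
  if rs is z :: rs' then opV n rs' (fun k => y k.+1 - z *: y k) else y.

Arguments opV {n}.
Lemma opV_entry n rs (y : nat -> 'cV[C]_n) i k :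
  (opV rs y k) i 0 = opS rs (fun k => y k i 0) k.
Proof.
elim: rs y k => [|z rs IH] y k //=.
rewrite IH; congr opS; apply: funext => j; by rewrite !mxE.
Qed.

Fixpoint Mf n (M : 'M[C]_n) (rs : seq C) : 'M[C]_n :=
  if rs is z :: rs' then @Mf n M rs' *m (M - z%:M) else 1%:M.

Arguments Mf {n}.
Lemma opV_pow n (M : 'M[C]_n) rs v :
  opV rs (fun k => M ^+ k *m v) = fun k => M ^+ k *m (Mf M rs *m v).
Proof.
elim: rs v => [|z rs IH] v /=; first by apply: funext => k; rewrite mul1mx.
have -> : (fun k => M ^+ k.+1 *m v - z *: (M ^+ k *m v)) =
          (fun k => M ^+ k *m ((M - z%:M) *m v)).
  apply: funext => k; rewrite exprSr mulmxBl mulmxBr -mulmxE mulmxA.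
  by rewrite mul_scalar_mx scalemxAr.
by rewrite IH; apply: funext => k; rewrite !mulmxA.
Qed.

Lemma Mf_prod n (M : 'M[C]_n.+1) rs :
  Mf M rs = \prod_(z <- rev rs) (M - z%:M).
Proof.
elim: rs => [|z rs IH] /=; first by rewrite big_nil.
by rewrite rev_cons big_rcons IH mulmxE.
Qed.


Lemma CH_roots n (M : 'M[C]_n.+1) :
  exists rs, Mf M rs = 0 /\ forall z, z \in rs -> eigenvalue M z.
Proof.
have [r Hr] := closed_field_poly_normal (char_poly M).
rewrite (monicP (char_poly_monic M)) scale1r in Hr.
exists (rev r); split.
  rewrite Mf_prod revK; have := Cayley_Hamilton M; rewrite Hr rmorph_prod.
  by under eq_bigr do rewrite rmorphB /= horner_mx_X horner_mx_C.
move=> z; rewrite mem_rev => zr.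
by rewrite eigenvalue_root_char Hr root_prod_XsubC.
Qed.

Lemma pow_vanish n (M : 'M[C]_n.+1) (v : 'cV[C]_n.+1) :
  (forall z, eigenvalue M z -> nc z < 1) ->
  forall i, vanish (fun k => nc ((M ^+ k *m v) i 0)).
Proof.
move=> Hev i; have [rs [H0 Hrs]] := @CH_roots n M.
apply: (@opS_vanish rs) => [z zr|]; first by apply: Hev; exact: Hrs.
move=> e e0; exists 0%N => k _.
rewrite -opV_entry opV_pow H0 mul0mx mulmx0 mxE.
by rewrite /nc Normc.normc0.
Qed.

End Cx.
Arguments nc {R}.

Lemma map_mxX (R : realType) n (M : 'M[R]_n) k :
  map_mx (real_complex R) (M ^+ k) = (map_mx (real_complex R) M) ^+ k.
Proof.
elim: k => [|k IH]; first by rewrite !expr0 map_mx1.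
by rewrite !exprS -!mulmxE map_mxM IH.
Qed.

Lemma ev_scale (R : realType) n (M : 'M[R]_n) (rho : R) : 0 < rho ->
  rho_schur rho M ->
  forall z, eigenvalue (map_mx (real_complex R) (rho^-1 *: M)) z -> nc z < 1.
Proof.
move=> r0 Hs z /eigenvalueP [v Hv vn0].
have Hv' : v *m map_mx (real_complex R) M = (z * (rho%:C)%C) *: v.
  have -> : M = rho *: (rho^-1 *: M) by rewrite scalerA divff ?scale1r // gt_eqF.
  by rewrite map_mxZ -scalemxAr Hv scalerA mulrC.
have := Hs (z * (rho%:C)%C) (ltac:(by apply/eigenvalueP; exists v)).
have rC : 0 < (rho%:C)%C by rewrite ltcR.
rewrite normrM (gtr0_norm rC) -ltr_pdivlMr // divff ?gt_eqF //.
by rewrite normc_nc -(rmorph1 (real_complex R)) ltcR.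
Qed.

Lemma conv (R : realType) d (M : 'M[R]_d) (rho : R) (x0 : 'cV[R]_d) :
  0 < rho -> rho_schur rho M ->
  (fun k => rho ^- k *: (M ^+ k *m x0)) @ \oo --> (0 : 'cV[R]_d).
Proof.
case: d M x0 => [|d] M x0 r0 Hs.
  have -> : (fun k => rho ^- k *: (M ^+ k *m x0)) = fun _ => 0.
    by apply: funext => k; rewrite flatmx0.
  exact: cvg_cst.
pose Cr := rho^-1 *: M.
have -> : (fun k => rho ^- k *: (M ^+ k *m x0)) = fun k => Cr ^+ k *m x0.
  by apply: funext => k; rewrite /Cr exprZn scalemxAl exprVn.
apply/cvgr0Pnorm_lt => e e0.
have Hv := @pow_vanish R d (map_mx (real_complex R) Cr) (map_mx (real_complex R) x0) (@ev_scale R _ M rho r0 Hs).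
have HK : forall i : 'I_d.+1, exists K, forall k, (K <= k)%N -> `|(Cr ^+ k *m x0) i 0| < e.
  move=> i; have [K HK] := Hv i e e0; exists K => k Kk.
  by have := HK k Kk; rewrite -map_mxX -map_mxM mxE nc_real.
have [Kf HKf] := choice HK.
apply: filterS (nbhs_infty_ge (\max_i Kf i)) => k Kk.
change (mx_norm (Cr ^+ k *m x0) < e). rewrite mx_normrE; apply: (big_ind (fun x => x < e)) => //.
  by move=> x y hx hy; rewrite gt_max hx hy.
move=> [i j] _ /=; rewrite (ord1 j); apply: HKf.
exact: leq_trans (leq_bigmax i) Kk.
Qed.

Lemma term_ge0 (R : realType) d n (Q : 'M[R]_d) (S : 'M[R]_(n, d)) (Rm : 'M[R]_n)
  (N : 'M[R]_(n, d)) (delta lambda : R) (x : 'cV[R]_d) :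
  0 <= lambda -> psd (Q + (S^T *m N + N^T *m S) + N^T *m Rm *m N) ->
  0 <= (x^T *m (ulsubmx (Mdl Q S Rm delta lambda) *m x)) 0 0
           + 2 * ((col_mx (N *m x) (0 : 'cV[R]_n))^T *m (dlsubmx (Mdl Q S Rm delta lambda) *m x)) 0 0
           + ((col_mx (N *m x) (0 : 'cV[R]_n))^T *m (drsubmx (Mdl Q S Rm delta lambda) *m (col_mx (N *m x) (0 : 'cV[R]_n)))) 0 0.
Proof.
move=> l0 Hp; rewrite /Mdl block_mxKul block_mxKdl block_mxKdr.
rewrite tr_col_mx mul_col_mx mul_row_col mul_block_col.
rewrite !trmx0 !mul0mx !mulmx0 !addr0 mul_row_col mul0mx addr0.
set u := N *m x.
have Hx := Hp x.
have E : (x^T *m (Q + (S^T *m N + N^T *m S) + N^T *m Rm *m N) *m x) 0 0 =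
   (x^T *m (Q *m x)) 0 0 + 2 * (u^T *m (S *m x)) 0 0 + (u^T *m (Rm *m u)) 0 0.
  have T1 : (x^T *m (S^T *m N) *m x) 0 0 = (u^T *m (S *m x)) 0 0.
    have tr11 (P : 'M[R]_1) : P^T 0 0 = P 0 0 by rewrite mxE.
    by rewrite -tr11 /u !trmx_mul !trmxK !mulmxA.
  have addE (P1 P2 : 'M[R]_1) : (P1 + P2) 0 0 = P1 0 0 + P2 0 0 by rewrite mxE.
  rewrite !mulmxDr !mulmxDl !addE T1 /u trmx_mul !mulmxA. lra.
have addE (P1 P2 : 'M[R]_1) : (P1 + P2) 0 0 = P1 0 0 + P2 0 0 by rewrite mxE.
have sclE (c : R) (P1 : 'M[R]_1) : (c *: P1) 0 0 = c * P1 0 0 by rewrite mxE.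
rewrite mulmxDl mulmxDr mul_scalar_mx -scalemxAr addE sclE.
have uu : 0 <= (u^T *m u) 0 0.
  rewrite mxE; apply: sumr_ge0 => i _; rewrite mxE; by rewrite -expr2 sqr_ge0.
have c0 : 0 <= lambda * delta ^+ 2 by rewrite mulr_ge0 ?sqr_ge0.
move: Hx; rewrite E => Hx.
have := mulr_ge0 c0 uu; lra.
Qed.

Theorem lemma2p13 (R : realType) (d n : nat) (A : 'M[R]_d) (B : 'M[R]_(d, n))
  (Q : 'M[R]_d) (S : 'M[R]_(n, d)) (Rm : 'M[R]_n) (rho delta : R) :
  Q^T = Q -> Rm^T = Rm -> 0 < rho -> 0 <= delta ->
  (exists N : 'M[R]_(n, d),
      rho_schur rho (A + B *m N) /\
      psd (Q + (S^T *m N + N^T *m S) + N^T *m Rm *m N)) ->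
  forall lambda : R, 0 <= lambda ->
    rho_min_stable rho A (row_mx B B) (Mdl Q S Rm delta lambda).
Proof.
move=> _ _ r0 _ [N [Hs Hp]] lambda l0 x0.
pose x := fun k => (A + B *m N) ^+ k *m x0.
exists x, (fun k => col_mx (N *m x k) (0 : 'cV[R]_n)); split.
- move=> k; rewrite /x mul_row_col mulmx0 addr0 exprS -mulmxE.
  by rewrite -mulmxA mulmxDl !mulmxA.
- move=> K; apply: sumr_ge0 => k _; apply: mulr_ge0.
    by rewrite invr_ge0 exprn_ge0 // ltW.
  exact: term_ge0.
- by rewrite /x expr0 mul1mx.
- exact: conv.
Qed.
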